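(* Let $m$ be a positive integer, $\gamma\in C^m(\mathbb{R},\mathbb{R}^3)$, and $K\subseteq\mathbb{R}$ a compact set containing at least $m+1$ points and having finitely many isolated points. If $\gamma$ satisfies the discrete $A/V$ condition on $K$, then $\gamma$ satisfies the $A/V$ condition on $K$. Moreover, if $m=1$, the same conclusion holds for any compact $K\subseteq\mathbb{R}$ containing at least $2$ points.
   Context: $C^m(\mathbb{R},\mathbb{R}^3)$: curves whose components are $m$-times continuously differentiable with bounded $m$th derivative. For $\gamma=(f,g,h)$ and $a\in\mathbb{R}$, $T_af(x)=\sum_{k=0}^m\frac{f^{(k)}(a)}{k!}(x-a)^k$ (similarly $T_ag$); $A(\gamma;a,b)= h(b)-h(a)-2\int_a^b\big((T_af)'T_ag-(T_ag)'T_af\big) + 2f(a)(g(b)-T_ag(b)) - 2g(a)(f(b)-T_af(b))$, $V(\gamma;a,b)=(b-a)^{2m}+(b-a)^m\int_a^b(|(T_af)'|+|(T_ag)'|)$. $\gamma$ satisfies the $A/V$ condition on $E$ if for every $\varepsilon>0$ there is $\delta>0$ with $|A(\gamma;a,b)/V(\gamma;a,b)|<\varepsilon$ for all $a,b\in E$ with $0<b-a<\delta$. For $X$ a set of $m+1$ distinct points, $P(X;\phi)$ is the unique polynomial of degree $\le m$ agreeing with $\phi$ on $X$; $P_f=P(X;f)$, $P_g=P(X;g)$, and for $a,b\in X$: $A[X,\gamma;a,b]=h(b)-h(a)-2\int_a^b(P_f'P_g-P_g'P_f)$, $V[X,\gamma;a,b]=\operatorname{diam}(X)^{2m}+\operatorname{diam}(X)^m\int_a^b(|P_f'|+|P_g'|)$.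 $\gamma$ satisfies the discrete $A/V$ condition on $E$ if for every $\varepsilon>0$ there is $\delta>0$ such that $|A[X,\gamma;a,b]/V[X,\gamma;a,b]|<\varepsilon$ for all $X\subseteq E$ with $\#X=m+1$, $\operatorname{diam}X<\delta$, and $a,b\in X$ with $a<b$. *)

(* Defs.v *)
From Stdlib Require Import Reals Lra List.
From Stdlib Require Rtopology.
From Coquelicot Require Import Coquelicot.
Import ListNotations.
Open Scope R_scope.

Definition Cm (m : nat) (f : R -> R) : Prop :=
  (forall k x, (k <= m)%nat -> ex_derive_n f k x) /\
  (forall k x, (k <= m)%nat -> continuous (Derive_n f k) x) /\
  (exists M, forall x, Rabs (Derive_n f m x) <= M).

Definition Taylor (m : nat) (f : R -> R) (a : R) (x : R) : R :=
  sum_f_R0 (fun k => Derive_n f k a / INR (Factorial.fact k) * (x - a) ^ k) m.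

Definition Acont (m : nat) (f g h : R -> R) (a b : R) : R :=
  h b - h a
  - 2 * RInt (fun x => Derive (Taylor m f a) x * Taylor m g a x
                     - Derive (Taylor m g a) x * Taylor m f a x) a b
  + 2 * f a * (g b - Taylor m g a b)
  - 2 * g a * (f b - Taylor m f a b).

Definition Vcont (m : nat) (f g : R -> R) (a b : R) : R :=
  (b - a) ^ (2 * m)
  + (b - a) ^ m * RInt (fun x => Rabs (Derive (Taylor m f a) x)
                               + Rabs (Derive (Taylor m g a) x)) a b.

Definition AV_condition (m : nat) (f g h : R -> R) (E : R -> Prop) : Prop :=
  forall eps, 0 < eps -> exists delta, 0 < delta /\
    forall a b, E a -> E b -> 0 < b - a < delta ->
      Rabs (Acont m f g h a b / Vcont m f g a b) < eps.

(* Finite sets X of reals are represented by duplicate-free lists. *)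

Definition lagrange (xs : list R) (phi : R -> R) (x : R) : R :=
  fold_right Rplus 0
    (map (fun i =>
       phi (nth i xs 0) *
       fold_right Rmult 1
         (map (fun j => (x - nth j xs 0) / (nth i xs 0 - nth j xs 0))
              (filter (fun j => negb (Nat.eqb j i)) (seq 0 (length xs)))))
     (seq 0 (length xs))).

Definition diam (xs : list R) : R :=
  fold_right Rmax 0
    (map (fun x => fold_right Rmax 0 (map (fun y => Rabs (x - y)) xs)) xs).

Definition Adisc (f g h : R -> R) (xs : list R) (a b : R) : R :=
  h b - h a
  - 2 * RInt (fun x => Derive (lagrange xs f) x * lagrange xs g x
                     - Derive (lagrange xs g) x * lagrange xs f x) a b.

Definition Vdisc (m : nat) (f g : R -> R) (xs : list R) (a b : R) : R :=
  diam xs ^ (2 * m)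
  + diam xs ^ m * RInt (fun x => Rabs (Derive (lagrange xs f) x)
                               + Rabs (Derive (lagrange xs g) x)) a b.

Definition discrete_AV_condition (m : nat) (f g h : R -> R) (E : R -> Prop) : Prop :=
  forall eps, 0 < eps -> exists delta, 0 < delta /\
    forall xs : list R, NoDup xs -> length xs = S m -> (forall x, In x xs -> E x) ->
      diam xs < delta ->
      forall a b, In a xs -> In b xs -> a < b ->
        Rabs (Adisc f g h xs a b / Vdisc m f g xs a b) < eps.

Definition isolated_point (K : R -> Prop) (x : R) : Prop :=
  K x /\ exists eps, 0 < eps /\ forall y, K y -> Rabs (y - x) < eps -> y = x.

Definition finitely_many_isolated (K : R -> Prop) : Prop :=
  exists l : list R, forall x, isolated_point K x -> In x l.

Definition at_least_points (n : nat) (K : R -> Prop) : Prop :=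
  exists l : list R, NoDup l /\ length l = n /\ forall x, In x l -> K x.

(* Main.v *)
Require Import Defs.
From Stdlib Require Import Reals List Lra Lia Classical IndefiniteDescription.
From Stdlib Require Rtopology.
From Coquelicot Require Import Coquelicot.
Import ListNotations.
Open Scope R_scope.

Definition sm (p : R -> R) := forall k x, ex_derive_n p k x.
Definition polyd (n : nat) (p : R -> R) := sm p /\ forall x, Derive_n p (S n) x = 0.

Lemma loc_all (P : R -> Prop) x : (forall y, P y) -> locally x P.
Proof. intros H. apply filter_forall. exact H. Qed.

Lemma sm_ex_derive p j x : sm p -> ex_derive (Derive_n p j) x.
Proof. intros H. exact (H (S j) x). Qed.

Lemma sm_is_derive p j x : sm p -> is_derive (Derive_n p j) x (Derive_n p (S j) x).
Proof. intros H. apply Derive_correct. exact (H (S j) x). Qed.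

Lemma sm_cont p j x : sm p -> continuous (Derive_n p j) x.
Proof. intros H. eapply (ex_derive_continuous (Derive_n p j)). apply sm_ex_derive; auto. Qed.

Lemma sm_const c : sm (fun _ => c).
Proof. intros k x. apply ex_derive_n_const. Qed.

Lemma sm_plus p q : sm p -> sm q -> sm (fun x => p x + q x).
Proof. intros Hp Hq k x. apply ex_derive_n_plus; apply loc_all; intros; auto. Qed.

Lemma sm_minus p q : sm p -> sm q -> sm (fun x => p x - q x).
Proof. intros Hp Hq k x. apply ex_derive_n_minus; apply loc_all; intros; auto. Qed.

Lemma sm_scal c p : sm p -> sm (fun x => c * p x).
Proof. intros Hp k x. apply ex_derive_n_scal_l; auto. Qed.

Lemma sm_ext p q : sm p -> (forall x, p x = q x) -> sm q.
Proof. intros Hp He k x. eapply ex_derive_n_ext; eauto. Qed.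

Lemma Dn_plus p q k x : sm p -> sm q ->
  Derive_n (fun x => p x + q x) k x = Derive_n p k x + Derive_n q k x.
Proof. intros Hp Hq. apply Derive_n_plus; apply loc_all; intros; auto. Qed.

Lemma Dn_minus p q k x : sm p -> sm q ->
  Derive_n (fun x => p x - q x) k x = Derive_n p k x - Derive_n q k x.
Proof. intros Hp Hq. apply Derive_n_minus; apply loc_all; intros; auto. Qed.

Lemma lin_factor a b p : sm p -> forall k x,
  ex_derive_n (fun y => (a*y+b) * p y) k x /\
  Derive_n (fun y => (a*y+b) * p y) k x =
    (a*x+b) * Derive_n p k x + INR k * a * Derive_n p (pred k) x.
Proof.
  intros Hp k. induction k as [|k IH]; intros x.
  - simpl. split; auto. ring.
  - assert (Heq : forall y, Derive_n (fun y => (a*y+b) * p y) k y =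
        (a*y+b) * Derive_n p k y + INR k * a * Derive_n p (pred k) y).
    { intros y; apply IH. }
    assert (H1 := sm_ex_derive p k x Hp).
    assert (H2 := sm_ex_derive p (pred k) x Hp).
    assert (Hex : ex_derive (fun y => (a*y+b) * Derive_n p k y + INR k * a * Derive_n p (pred k) y) x).
    { auto_derive. auto. }
    split.
    + simpl. eapply ex_derive_ext. intros t; symmetry; apply Heq. exact Hex.
    + simpl. rewrite (Derive_ext _ _ _ Heq).
      apply is_derive_unique. auto_derive. auto.
      destruct k as [|k].
      * simpl. ring.
      * change (Derive (fun x : R => Derive_n p (S k) x) x) with (Derive_n p (S (S k)) x).
        change (Derive (fun x : R => Derive_n p (pred (S k)) x) x) with (Derive_n p (S k) x).
        change (Derive (Derive_n p (S k)) x) with (Derive_n p (S (S k)) x).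
        simpl pred. ring.
Qed.

Lemma sm_lin a b p : sm p -> sm (fun y => (a*y+b) * p y).
Proof. intros Hp k x. apply (lin_factor a b p Hp k x). Qed.

Lemma Dn_zero_S p n : sm p -> (forall x, Derive_n p n x = 0) -> forall x, Derive_n p (S n) x = 0.
Proof.
  intros Hp H x. simpl. rewrite (Derive_ext _ (fun _ => 0) _ H). apply Derive_const.
Qed.

Lemma polyd_const n c : polyd n (fun _ => c).
Proof. split. apply sm_const. intros x. apply Derive_n_const. Qed.

Lemma polyd_plus n p q : polyd n p -> polyd n q -> polyd n (fun x => p x + q x).
Proof.
  intros [Hp Hp0] [Hq Hq0]. split. apply sm_plus; auto.
  intros x. rewrite Dn_plus; auto. rewrite Hp0, Hq0. ring.
Qed.

Lemma polyd_minus n p q : polyd n p -> polyd n q -> polyd n (fun x => p x - q x).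
Proof.
  intros [Hp Hp0] [Hq Hq0]. split. apply sm_minus; auto.
  intros x. rewrite Dn_minus; auto. rewrite Hp0, Hq0. ring.
Qed.

Lemma polyd_scal n c p : polyd n p -> polyd n (fun x => c * p x).
Proof.
  intros [Hp Hp0]. split. apply sm_scal; auto.
  intros x. rewrite Derive_n_scal_l. rewrite Hp0. ring.
Qed.

Lemma polyd_ext n p q : polyd n p -> (forall x, p x = q x) -> polyd n q.
Proof.
  intros [Hp Hp0] He. split. eapply sm_ext; eauto.
  intros x. rewrite <- (Derive_n_ext _ _ _ _ He). auto.
Qed.

Lemma polyd_S n p : polyd n p -> polyd (S n) p.
Proof.
  intros [Hp Hp0]. split; auto. apply Dn_zero_S; auto.
Qed.

Lemma polyd_le n n' p : (n <= n')%nat -> polyd n p -> polyd n' p.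
Proof. intros H; induction H; auto. intros; apply polyd_S; auto. Qed.

Lemma polyd_lin n a b p : polyd n p -> polyd (S n) (fun y => (a*y+b) * p y).
Proof.
  intros [Hp Hp0]. split. apply sm_lin; auto.
  intros x. destruct (lin_factor a b p Hp (S (S n)) x) as [_ ->].
  simpl pred. rewrite Hp0. rewrite (Dn_zero_S p (S n) Hp Hp0). ring.
Qed.

Lemma polyd_deriv n p : polyd n p -> forall x, Derive_n p n x = Derive_n p n 0.
Proof.
  intros [Hp Hp0] x.
  destruct (MVT_gen (Derive_n p n) 0 x (Derive_n p (S n))) as [c [_ Hc]].
  - intros; apply sm_is_derive; auto.
  - intros; apply continuity_pt_filterlim. apply sm_cont; auto.
  - rewrite Hp0 in Hc. lra.
Qed.

Lemma polyd_shiftpow a j : polyd j (fun x => (x-a)^j).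
Proof.
  induction j.
  - apply (polyd_ext 0 (fun _ => 1)). apply polyd_const. intros; simpl; ring.
  - eapply polyd_ext. apply (polyd_lin j 1 (-a)). exact IHj. intros; simpl; ring.
Qed.

Lemma polyd_sum n (F : nat -> R -> R) N :
  (forall j, (j <= N)%nat -> polyd n (F j)) -> polyd n (fun x => sum_f_R0 (fun j => F j x) N).
Proof.
  induction N; intros H.
  - simpl. apply (polyd_ext n (F 0%nat)). apply H. lia. intros; reflexivity.
  - simpl. apply polyd_plus. apply IHN. intros; apply H; lia. apply H; lia.
Qed.

Lemma polyd_Taylor m f a : polyd m (Taylor m f a).
Proof.
  unfold Taylor. apply polyd_sum. intros j Hj.
  apply polyd_scal. apply (polyd_le j). auto. apply polyd_shiftpow.
Qed.

Lemma Dn_sum (F : nat -> R -> R) N k x :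
  (forall j, sm (F j)) ->
  Derive_n (fun x => sum_f_R0 (fun j => F j x) N) k x = sum_f_R0 (fun j => Derive_n (F j) k x) N.
Proof.
  intros H. induction N.
  - simpl. apply Derive_n_ext. reflexivity.
  - simpl. rewrite Dn_plus. rewrite IHN. reflexivity.
    assert (polyd 0 (fun _ => 0) -> True) by auto.
    clear IHN. induction N. simpl. eapply sm_ext. apply H. reflexivity.
    simpl. apply sm_plus; auto. apply H.
Qed.

Lemma sum_single (F : nat -> R) N k : (k <= N)%nat -> (forall j, (j <= N)%nat -> j <> k -> F j = 0) ->
  sum_f_R0 F N = F k.
Proof.
  induction N; intros Hk H.
  - simpl. assert (k = 0%nat) by lia. subst; auto.
  - simpl. destruct (Nat.eq_dec k (S N)).
    + subst. rewrite (sum_eq_R0 F N). ring. intros; apply H; lia.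
    + rewrite IHN. rewrite (H (S N)); auto. ring. lia. intros; apply H; lia.
Qed.

Lemma Dn_shiftpow a j k : Derive_n (fun x => (x-a)^j) k a = if Nat.eq_dec j k then INR (Factorial.fact k) else 0.
Proof.
  transitivity (Derive_n (fun z => z^j) k (a + -a)).
  { rewrite <- Derive_n_comp_trans. apply Derive_n_ext. intros; reflexivity. }
  rewrite Derive_n_pow.
  replace (a + - a) with 0 by ring.
  destruct (Compare_dec.le_dec k j); destruct (Nat.eq_dec j k).
  - subst. rewrite Nat.sub_diag. change (Factorial.fact 0) with 1%nat. simpl pow. simpl INR. field.
  - rewrite pow_i by lia. ring.
  - lia.
  - reflexivity.
Qed.

Lemma Taylor_Dn m f a k : (k <= m)%nat -> Derive_n (Taylor m f a) k a = Derive_n f k a.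
Proof.
  intros Hk. unfold Taylor.
  rewrite Dn_sum.
  2:{ intros j. apply sm_scal. apply (polyd_shiftpow a j). }
  rewrite (sum_single _ m k); auto.
  - rewrite Derive_n_scal_l. rewrite Dn_shiftpow. destruct (Nat.eq_dec k k); [|lia].
    field. apply not_0_INR. apply Factorial.fact_neq_0.
  - intros j Hj Hjk. rewrite Derive_n_scal_l. rewrite Dn_shiftpow.
    destruct (Nat.eq_dec j k); [lia|]. ring.
Qed.

Lemma Taylor_at m f a : Taylor m f a a = f a.
Proof. apply (Taylor_Dn m f a 0). lia. Qed.

Lemma sm_Taylor m f a : sm (Taylor m f a).
Proof. apply polyd_Taylor. Qed.

Lemma polyd_prod (l : list nat) (c d : nat -> R) :
  polyd (length l) (fun x => fold_right Rmult 1 (map (fun j => (x - c j) / d j) l)).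
Proof.
  induction l as [|j l IH].
  - simpl. apply polyd_const.
  - simpl. eapply polyd_ext. apply (polyd_lin _ (/ d j) (- c j / d j)). exact IH.
    intros x. unfold Rdiv. ring.
Qed.

Lemma polyd_fsum n (l : list nat) (G : nat -> R -> R) :
  (forall i, In i l -> polyd n (G i)) ->
  polyd n (fun x => fold_right Rplus 0 (map (fun i => G i x) l)).
Proof.
  induction l as [|i l IH]; intros H.
  - simpl. apply polyd_const.
  - simpl. apply polyd_plus. apply H; simpl; auto. apply IH. intros; apply H; simpl; auto.
Qed.

Lemma filter_notin (l : list nat) i : ~ In i l -> filter (fun j => negb (Nat.eqb j i)) l = l.
Proof.
  induction l as [|j l IH]; intros H. reflexivity.
  simpl. destruct (Nat.eqb_spec j i). subst; exfalso; apply H; simpl; auto.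
  simpl. f_equal. apply IH. intros Hc; apply H; simpl; auto.
Qed.

Lemma filter_len (l : list nat) i : NoDup l -> In i l ->
  length (filter (fun j => negb (Nat.eqb j i)) l) = pred (length l).
Proof.
  induction l as [|j l IH]; intros Hn Hi.
  - inversion Hi.
  - inversion Hn; subst. simpl. destruct (Nat.eqb_spec j i).
    + subst. simpl. rewrite filter_notin; auto.
    + simpl. destruct Hi as [Hi|Hi]; [congruence|]. rewrite IH; auto.
      destruct l. inversion Hi. reflexivity.
Qed.

Lemma polyd_lagrange m xs phi : length xs = S m -> polyd m (lagrange xs phi).
Proof.
  intros Hl. unfold lagrange. apply polyd_fsum. intros i Hi.
  apply polyd_scal. rewrite Hl in *.
  assert (E : length (filter (fun j : nat => negb (j =? i)%nat) (seq 0 (S m))) = m).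
  { rewrite filter_len. rewrite length_seq. reflexivity. apply seq_NoDup. auto. }
  rewrite <- E at 1.
  apply (polyd_prod _ (fun j => nth j xs 0) (fun j => nth i xs 0 - nth j xs 0)).
Qed.

Lemma fsum_zero (l : list nat) (T : nat -> R) :
  (forall i, In i l -> T i = 0) -> fold_right Rplus 0 (map T l) = 0.
Proof.
  induction l as [|j l IH]; intros H. reflexivity.
  simpl. rewrite H, IH. ring. intros; apply H; simpl; auto. simpl; auto.
Qed.

Lemma fsum_single (l : list nat) (T : nat -> R) k :
  NoDup l -> In k l -> (forall i, In i l -> i <> k -> T i = 0) ->
  fold_right Rplus 0 (map T l) = T k.
Proof.
  induction l as [|j l IH]; intros Hn Hk H.
  - inversion Hk.
  - inversion Hn; subst. simpl. destruct Hk as [Hk|Hk].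
    + subst. rewrite fsum_zero. ring. intros i Hi. apply H. simpl; auto.
      intros Hc; subst; auto.
    + rewrite IH; auto. rewrite H. ring. simpl; auto. intros Hc; subst; auto.
      intros; apply H; simpl; auto.
Qed.

Lemma fprod_zero (l : list nat) (G : nat -> R) j : In j l -> G j = 0 -> fold_right Rmult 1 (map G l) = 0.
Proof.
  induction l as [|j' l IH]; intros Hj HG. inversion Hj.
  simpl. destruct Hj as [Hj|Hj]. subst. rewrite HG; ring. rewrite IH; auto; ring.
Qed.

Lemma fprod_one (l : list nat) (G : nat -> R) : (forall j, In j l -> G j = 1) -> fold_right Rmult 1 (map G l) = 1.
Proof.
  induction l as [|j' l IH]; intros H. reflexivity.
  simpl. rewrite H, IH. ring. intros; apply H; simpl; auto. simpl; auto.
Qed.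

Lemma lagrange_interp xs phi x : NoDup xs -> In x xs -> lagrange xs phi x = phi x.
Proof.
  intros Hn Hx. destruct (In_nth xs x 0 Hx) as [k [Hk Hkx]].
  rewrite <- Hkx. unfold lagrange.
  rewrite (fsum_single _ _ k).
  - rewrite fprod_one. ring. intros j Hj. apply filter_In in Hj. destruct Hj as [Hj Hjk].
    apply in_seq in Hj. apply Bool.negb_true_iff in Hjk. apply Nat.eqb_neq in Hjk.
    field. intros He. apply Hjk. apply (proj1 (NoDup_nth xs 0) Hn); [lia|lia|lra].
  - apply seq_NoDup.
  - apply in_seq. lia.
  - intros i Hi Hik. rewrite (fprod_zero _ _ k). ring.
    + apply filter_In. split. apply in_seq; lia. apply Bool.negb_true_iff. apply Nat.eqb_neq. auto.
    + unfold Rdiv. ring.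
Qed.

Lemma list_min (l : list R) : l <> nil -> exists mu, In mu l /\ forall y, In y l -> mu <= y.
Proof.
  induction l as [|x l IH]; intros H. congruence.
  destruct l as [|x' l'].
  - exists x. split. simpl; auto. intros y [Hy|[]]. subst; lra.
  - destruct IH as [mu [Hmu Hle]]. congruence.
    destruct (Rle_dec x mu).
    + exists x. split. simpl; auto. intros y [Hy|Hy]. subst; lra. specialize (Hle y Hy). lra.
    + exists mu. split. right; auto. intros y [Hy|Hy]. subst; lra. auto.
Qed.

Lemma sort_fun n : forall l : list R, NoDup l -> length l = S n ->
  exists z : nat -> R, (forall i, (i <= n)%nat -> In (z i) l) /\ (forall i, (i < n)%nat -> z i < z (S i)).
Proof.
  induction n; intros l Hn Hl.
  - destruct l as [|x l]. simpl in Hl; lia. exists (fun _ => x). split.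
    intros; simpl; auto. intros; lia.
  - destruct (list_min l) as [mu [Hmu Hle]]. intros Hc; subst; simpl in Hl; lia.
    destruct (in_split mu l Hmu) as [l1 [l2 E]]. subst l.
    assert (Hn' : NoDup (l1 ++ l2)) by (eapply NoDup_remove_1; eauto).
    assert (Hni : ~ In mu (l1 ++ l2)) by (eapply NoDup_remove_2; eauto).
    assert (Hl' : length (l1 ++ l2) = S n).
    { rewrite length_app in *. simpl in Hl. lia. }
    destruct (IHn _ Hn' Hl') as [z [Hz1 Hz2]].
    exists (fun i => match i with O => mu | S i' => z i' end). split.
    + intros [|i] Hi. apply in_or_app; right; simpl; auto.
      assert (Hin := Hz1 i ltac:(lia)). apply in_app_or in Hin. apply in_or_app.
      destruct Hin; [left|right; simpl; right]; auto.
    + intros [|i] Hi.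
      * assert (Hin := Hz1 0%nat ltac:(lia)).
        assert (Hin2 : In (z 0%nat) (l1 ++ mu :: l2)).
        { apply in_app_or in Hin. apply in_or_app. destruct Hin; [left|right; simpl; right]; auto. }
        specialize (Hle _ Hin2). destruct (Req_dec mu (z 0%nat)). rewrite <- H in Hin. contradiction. lra.
      * apply Hz2. lia.
Qed.

Lemma rolle_gen k : forall (F : nat -> R -> R) (z : nat -> R),
  (forall j x, (j < k)%nat -> is_derive (F j) x (F (S j) x)) ->
  (forall i, (i <= k)%nat -> F 0%nat (z i) = 0) ->
  (forall i, (i < k)%nat -> z i < z (S i)) ->
  exists xi, z 0%nat <= xi <= z k /\ F k xi = 0.
Proof.
  induction k; intros F z HD H0 Hinc.
  - exists (z 0%nat). split. lra. apply H0; lia.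
  - assert (HR : forall i, exists w, (i < S k)%nat -> z i < w < z (S i) /\ F 1%nat w = 0).
    { intros i. destruct (Compare_dec.lt_dec i (S k)) as [Hi|Hi].
      - destruct (MVT_cor2 (F 0%nat) (F 1%nat) (z i) (z (S i))) as [c [Hc1 Hc2]].
        + apply Hinc; auto.
        + intros c _. apply is_derive_Reals. apply HD. lia.
        + exists c. intros _. split; auto. rewrite (H0 i), (H0 (S i)) in Hc1 by lia.
          assert (z (S i) - z i > 0) by (specialize (Hinc i Hi); lra).
          destruct (Req_dec (F 1%nat c) 0); auto. exfalso.
          assert (F 1%nat c * (z (S i) - z i) <> 0) by (apply Rmult_integral_contrapositive; split; lra).
          lra.
      - exists 0. intros; lia. }
    set (w := fun i => proj1_sig (constructive_indefinite_description _ (HR i))).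
    assert (Hw : forall i, (i < S k)%nat -> z i < w i < z (S i) /\ F 1%nat (w i) = 0).
    { intros i Hi. unfold w. destruct (constructive_indefinite_description _ (HR i)) as [wi Hwi]. simpl. auto. }
    destruct (IHk (fun j => F (S j)) w) as [xi [Hxi1 Hxi2]].
    + intros j x Hj. apply HD. lia.
    + intros i Hi. apply Hw. lia.
    + intros i Hi. destruct (Hw i ltac:(lia)). destruct (Hw (S i) ltac:(lia)). lra.
    + exists xi. split; auto. destruct (Hw 0%nat ltac:(lia)). destruct (Hw k ltac:(lia)). lra.
Qed.

Lemma fmax_ge (l : list R) (F : R -> R) y : In y l -> F y <= fold_right Rmax 0 (map F l).
Proof.
  induction l as [|x l IH]; intros H. inversion H.
  simpl. destruct H as [H|H]. subst. apply Rmax_l. eapply Rle_trans. apply IH; auto. apply Rmax_r.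
Qed.

Lemma fmax_le (l : list R) (F : R -> R) c : 0 <= c -> (forall y, In y l -> F y <= c) ->
  fold_right Rmax 0 (map F l) <= c.
Proof.
  induction l as [|x l IH]; intros Hc H. simpl; auto.
  simpl. apply Rmax_lub. apply H; simpl; auto. apply IH; auto. intros; apply H; simpl; auto.
Qed.

Lemma diam_ge xs x y : In x xs -> In y xs -> Rabs (x - y) <= diam xs.
Proof.
  intros Hx Hy. unfold diam.
  eapply Rle_trans; [|apply (fmax_ge _ (fun x => fold_right Rmax 0 (map (fun y => Rabs (x - y)) xs)) x Hx)].
  apply (fmax_ge _ (fun y => Rabs (x - y))); auto.
Qed.

Lemma diam_le xs lo hi : lo <= hi -> (forall x, In x xs -> lo <= x <= hi) -> diam xs <= hi - lo.
Proof.
  intros Hlh H. unfold diam. apply fmax_le. lra. intros x Hx. apply fmax_le. lra.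
  intros y Hy. apply H in Hx. apply H in Hy. apply Rabs_le. lra.
Qed.

Definition nonisol (K : R -> Prop) a := forall e, 0 < e -> exists y, K y /\ y <> a /\ Rabs (y - a) < e.

Lemma pick_points K a : nonisol K a -> forall n r, 0 < r ->
  exists L, length L = n /\ NoDup L /\ forall y, In y L -> K y /\ 0 < Rabs (y - a) < r.
Proof.
  intros Hna n. induction n; intros r Hr.
  - exists nil. split; [reflexivity|split; [constructor|intros ? []]].
  - destruct (Hna r Hr) as [y0 [Ky [Hya Hyr]]]. rename y0 into y.
    assert (Hpos : 0 < Rabs (y - a)) by (apply Rabs_pos_lt; lra).
    destruct (IHn (Rabs (y - a)) Hpos) as [L [HL1 [HL2 HL3]]].
    exists (y :: L). split; [|split].
    + simpl; auto.
    + constructor; auto. intros Hin. apply HL3 in Hin. lra.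
    + intros z [Hz|Hz]. subst; repeat split; auto. apply HL3 in Hz. repeat split; try tauto; lra.
Qed.

Lemma isol_delta K (l : list R) : exists d0, 0 < d0 /\ forall x, In x l -> isolated_point K x ->
  forall y, K y -> Rabs (y - x) < d0 -> y = x.
Proof.
  induction l as [|x l IH].
  - exists 1. split. lra. intros x [].
  - destruct IH as [d [Hd H]].
    destruct (classic (isolated_point K x)) as [Hx|Hx].
    + destruct Hx as [Kx [e [He He2]]]. exists (Rmin d e). split. apply Rmin_pos; auto.
      intros x' [Hx'|Hx'] Hiso y Ky Hy.
      * subst. apply He2; auto. eapply Rlt_le_trans; eauto. apply Rmin_r.
      * apply H; auto. eapply Rlt_le_trans; eauto. apply Rmin_l.
    + exists d. split; auto. intros x' [Hx'|Hx'] Hiso. subst; contradiction. apply H; auto.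
Qed.

Lemma fin_isol_nonisol K : finitely_many_isolated K -> exists d0, 0 < d0 /\
  forall a b, K a -> K b -> 0 < b - a < d0 -> nonisol K a.
Proof.
  intros [l Hl]. destruct (isol_delta K l) as [d0 [Hd0 H]]. exists d0. split; auto.
  intros a b Ka Kb Hab. apply NNPP. intros Hn. unfold nonisol in Hn.
  apply not_all_ex_not in Hn. destruct Hn as [e He].
  assert (Hiso : isolated_point K a).
  { split; auto. exists e. split.
    - apply NNPP. intros Hc. apply He. intros Hc2. contradiction.
    - intros y Ky Hy. apply NNPP. intros Hya. apply He. intros _. exists y. auto. }
  assert (b = a). { apply (H a (Hl a Hiso) Hiso b Kb). rewrite Rabs_right; lra. }
  lra.
Qed.

Definition smupto (n : nat) (p : R -> R) := forall k x, (k <= n)%nat -> ex_derive_n p k x.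

Lemma smupto_minus n p q : smupto n p -> sm q -> smupto n (fun x => p x - q x).
Proof.
  intros Hp Hq k x Hk. apply ex_derive_n_minus; apply loc_all; intros; auto. apply Hp; lia.
Qed.

Lemma Dn_minus_upto n p q x : smupto n p -> sm q ->
  Derive_n (fun x => p x - q x) n x = Derive_n p n x - Derive_n q n x.
Proof. intros Hp Hq. apply Derive_n_minus; apply loc_all; intros; auto. Qed.

Lemma upto_is_derive n p j x : smupto n p -> (S j <= n)%nat -> is_derive (Derive_n p j) x (Derive_n p (S j) x).
Proof. intros H Hj. apply Derive_correct. exact (H (S j) x Hj). Qed.

Lemma upto_cont n p j x : smupto n p -> (S j <= n)%nat -> continuity_pt (Derive_n p j) x.
Proof.
  intros H Hj. apply continuity_pt_filterlim.
  apply (ex_derive_continuous (Derive_n p j)). exact (H (S j) x Hj).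
Qed.

Lemma MVT_between (F dF : R -> R) u v :
  (forall x, is_derive F x (dF x)) -> (forall x, continuity_pt F x) ->
  exists c, Rmin u v <= c <= Rmax u v /\ F v - F u = dF c * (v - u).
Proof. intros H1 H2. apply MVT_gen; intros; auto. Qed.

Lemma betw_abs u v c : Rmin u v <= c <= Rmax u v -> Rabs (c - u) <= Rabs (v - u).
Proof.
  intros H. unfold Rmin, Rmax in H. destruct (Rle_dec u v);
  unfold Rabs; destruct (Rcase_abs (c - u)); destruct (Rcase_abs (v - u)); lra.
Qed.

Lemma r_bound m f a D eta : smupto m f -> 0 <= D ->
  (forall y, Rabs (y - a) <= D -> Rabs (Derive_n f m y - Derive_n f m a) <= eta) ->
  forall j, (j <= m)%nat -> forall y, Rabs (y - a) <= D ->
  Rabs (Derive_n (fun x => f x - Taylor m f a x) (m - j) y) <= eta * D ^ j.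
Proof.
  intros Hf HD Heta j. induction j; intros Hj y Hy.
  - rewrite Nat.sub_0_r. rewrite Dn_minus_upto; auto. 2: apply polyd_Taylor.
    rewrite (polyd_deriv m (Taylor m f a) (polyd_Taylor m f a) y).
    rewrite <- (polyd_deriv m (Taylor m f a) (polyd_Taylor m f a) a).
    rewrite Taylor_Dn; auto. simpl. rewrite Rmult_1_r. auto.
  - set (r := fun x => f x - Taylor m f a x).
    assert (Hr : smupto m r) by (apply smupto_minus; auto; apply polyd_Taylor).
    set (k := (m - S j)%nat).
    destruct (MVT_between (Derive_n r k) (Derive_n r (S k)) a y) as [c [Hc1 Hc2]].
    + intros; apply (upto_is_derive m); auto. unfold k; lia.
    + intros; apply (upto_cont m); auto. unfold k; lia.
    + assert (Hra : Derive_n r k a = 0).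
      { unfold r. rewrite Dn_minus_upto. rewrite Taylor_Dn. ring. unfold k; lia.
        intros k' x Hk'. apply Hf. unfold k in *; lia. apply polyd_Taylor. }
      rewrite Hra in Hc2. replace (Derive_n r k y) with (Derive_n r (S k) c * (y - a)) by lra.
      rewrite Rabs_mult. simpl (D ^ S j).
      assert (Hca : Rabs (c - a) <= D).
      { apply Rle_trans with (Rabs (y - a)); auto.
        apply betw_abs; auto. }
      assert (IH := IHj ltac:(lia) c Hca).
      replace (m - j)%nat with (S k) in IH by (unfold k; lia).
      replace (eta * (D * D^j)) with ((eta * D^j) * D) by ring.
      apply Rmult_le_compat; try apply Rabs_pos; auto.
Qed.

Lemma rolle_phi m f xs lo hi : smupto m f -> NoDup xs -> length xs = S m ->
  (forall x, In x xs -> lo <= x <= hi) ->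
  forall k, (k <= m)%nat -> exists xi, lo <= xi <= hi /\
    Derive_n (fun x => f x - lagrange xs f x) k xi = 0.
Proof.
  intros Hf Hn Hl Hlh k Hk.
  set (phi := fun x => f x - lagrange xs f x).
  assert (Hphi : smupto m phi) by (apply smupto_minus; auto; apply (polyd_lagrange m); auto).
  destruct (sort_fun m xs Hn Hl) as [z [Hz1 Hz2]].
  destruct (rolle_gen k (fun j => Derive_n phi j) z) as [xi [Hxi1 Hxi2]].
  - intros j x Hj. apply (upto_is_derive m); auto. lia.
  - intros i Hi. simpl. unfold phi. rewrite lagrange_interp; auto. ring. apply Hz1; lia.
  - intros i Hi. apply Hz2. lia.
  - exists xi. split; auto. assert (H0 := Hlh _ (Hz1 0%nat ltac:(lia))).
    assert (H1 := Hlh _ (Hz1 k Hk)). lra.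
Qed.

Lemma E_bound m f a s eta xs : smupto m f -> 0 <= s ->
  NoDup xs -> length xs = S m -> (forall x, In x xs -> a - s <= x <= a + s) ->
  (forall y, Rabs (y - a) <= 2*s -> Rabs (Derive_n f m y - Derive_n f m a) <= eta) ->
  forall j, (j <= m)%nat -> forall x, a - s <= x <= a + s ->
  Rabs (Derive_n (fun x => lagrange xs f x - Taylor m f a x) (m - j) x) <= (INR j + 1) * eta * (2*s) ^ j.
Proof.
  intros Hf Hs Hn Hl Hxs Heta.
  set (D := 2 * s). set (P := lagrange xs f). set (T := Taylor m f a).
  set (E := fun x => P x - T x).
  assert (HP : polyd m P) by (apply polyd_lagrange; auto).
  assert (HT : polyd m T) by (apply polyd_Taylor).
  assert (HE : polyd m E) by (apply polyd_minus; auto).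
  assert (Hr := r_bound m f a D eta Hf ltac:(unfold D; lra) Heta).
  assert (Hxi : forall j, (j <= m)%nat -> exists xi, a - s <= xi <= a + s /\
            Rabs (Derive_n E (m - j) xi) <= eta * D ^ j).
  { intros j Hj. destruct (rolle_phi m f xs (a - s) (a + s) Hf Hn Hl Hxs (m - j)) as [xi [Hxi1 Hxi2]].
    lia. exists xi. split; auto.
    assert (Hxa : Rabs (xi - a) <= D) by (unfold D; apply Rabs_le; lra).
    specialize (Hr j Hj xi Hxa).
    rewrite Dn_minus_upto in Hxi2; auto. 2:{ intros k x Hk; apply Hf; lia. } 2: apply HP.
    rewrite Dn_minus_upto in Hr; auto. 2:{ intros k x Hk; apply Hf; lia. } 2: apply HT.
    unfold E. rewrite Dn_minus. 2: apply HP. 2: apply HT.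
    fold P T in Hxi2, Hr. replace (Derive_n P (m - j) xi - Derive_n T (m - j) xi) with
      (Derive_n f (m - j) xi - Derive_n T (m - j) xi) by lra. auto. }
  intros j. induction j; intros Hj x Hx.
  - destruct (Hxi 0%nat Hj) as [xi [Hxi1 Hxi2]].
    destruct (MVT_between (Derive_n E m) (Derive_n E (S m)) xi x) as [c [Hc1 Hc2]].
    + intros; apply sm_is_derive. apply HE.
    + intros; apply continuity_pt_filterlim. apply sm_cont. apply HE.
    + rewrite (proj2 HE) in Hc2. rewrite Nat.sub_0_r in *. simpl (D ^ 0) in *.
      replace (Derive_n E m x) with (Derive_n E m xi) by lra. simpl. lra.
  - destruct (Hxi (S j) Hj) as [xi [Hxi1 Hxi2]].
    set (k := (m - S j)%nat).
    destruct (MVT_between (Derive_n E k) (Derive_n E (S k)) xi x) as [c [Hc1 Hc2]].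
    + intros; apply sm_is_derive. apply HE.
    + intros; apply continuity_pt_filterlim. apply sm_cont. apply HE.
    + assert (Hc : a - s <= c <= a + s).
      { unfold Rmin, Rmax in Hc1. destruct (Rle_dec xi x); lra. }
      assert (IH := IHj ltac:(lia) c Hc).
      replace (m - j)%nat with (S k) in IH by (unfold k; lia).
      replace (Derive_n E k x) with (Derive_n E k xi + Derive_n E (S k) c * (x - xi)) by lra.
      fold D in IH |- *.
      eapply Rle_trans. apply Rabs_triang. rewrite Rabs_mult.
      assert (Hxx : Rabs (x - xi) <= D) by (unfold D; apply Rabs_le; lra).
      assert (0 <= eta).
      { specialize (Heta a). rewrite Rminus_diag, Rabs_R0 in Heta. rewrite Rminus_diag, Rabs_R0 in Heta.
        apply Heta; lra. }
      assert (0 <= D ^ j) by (apply pow_le; unfold D; lra).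
      rewrite S_INR. simpl (D ^ S j). fold k in Hxi2. simpl (D ^ S j) in Hxi2.
      assert (Rabs (Derive_n E (S k) c) * Rabs (x - xi) <= (INR j + 1) * eta * D ^ j * D).
      { apply Rmult_le_compat; try apply Rabs_pos; auto. }
      lra.
Qed.

Lemma cR_plus (f g : R -> R) x : continuous f x -> continuous g x -> continuous (fun y => f y + g y) x.
Proof. intros; apply (continuous_plus f g); auto. Qed.
Lemma cR_minus (f g : R -> R) x : continuous f x -> continuous g x -> continuous (fun y => f y - g y) x.
Proof. intros; apply (continuous_minus f g); auto. Qed.
Lemma cR_mult (f g : R -> R) x : continuous f x -> continuous g x -> continuous (fun y => f y * g y) x.
Proof. intros; apply (continuous_mult f g); auto. Qed.
Lemma cR_abs (f : R -> R) x : continuous f x -> continuous (fun y => Rabs (f y)) x.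
Proof. intros; apply continuous_Rabs_comp; auto. Qed.
Lemma cR_const (c : R) x : continuous (fun _ : R => c) x.
Proof. apply continuous_const. Qed.
Lemma sm_cont0 p x : sm p -> continuous p x.
Proof. intros H. exact (sm_cont p 0 x H). Qed.
Lemma sm_contD p x : sm p -> continuous (Derive p) x.
Proof. intros H. exact (sm_cont p 1 x H). Qed.
Lemma sm_exD p x : sm p -> ex_derive p x.
Proof. intros H. exact (H 1%nat x). Qed.

Ltac smtac := first [assumption | apply sm_const | match goal with |- sm (Taylor _ _ _) => apply sm_Taylor end | idtac].
Ltac cont := repeat match goal with
  | |- continuous (fun _ => ?c) _ => apply continuous_const
  | |- continuous (fun y => _ + _) _ => apply cR_plus
  | |- continuous (fun y => _ - _) _ => apply cR_minus
  | |- continuous (fun y => _ * _) _ => apply cR_mult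
  | |- continuous (fun y => Rabs _) _ => apply cR_abs
  | |- continuous (fun y => Derive ?p y) _ => apply (sm_contD p); smtac
  | |- continuous (Derive ?p) _ => apply (sm_contD p); smtac
  | |- continuous (fun y => ?p y) _ => apply (sm_cont0 p); smtac
  | |- continuous ?p _ => apply (sm_cont0 p); smtac
  end.

Lemma exR (f : R -> R) a b : (forall x, continuous f x) -> ex_RInt f a b.
Proof. intros H. apply (ex_RInt_continuous (V:=R_CompleteNormedModule)). intros; apply H. Qed.

Lemma RInt_mono_b (f : R -> R) a x b : a <= x <= b -> (forall y, continuous f y) -> (forall y, 0 <= f y) ->
  RInt f a x <= RInt f a b.
Proof.
  intros Hx Hc Hp. rewrite <- (RInt_Chasles f a x b) by (apply exR; auto).
  assert (0 <= RInt f x b) by (apply RInt_ge_0; [lra|apply exR; auto|intros; auto]).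
  unfold plus; simpl. lra.
Qed.

Lemma dev_bound T a b x : sm T -> a <= x <= b ->
  Rabs (T x - T a) <= RInt (fun y => Rabs (Derive T y)) a b.
Proof.
  intros HT Hx. rewrite <- RInt_Derive.
  - eapply Rle_trans. apply abs_RInt_le. lra. apply exR; intros; cont.
    apply RInt_mono_b; auto. intros; cont. intros; apply Rabs_pos.
  - intros; apply sm_exD; auto.
  - intros; cont.
Qed.

Lemma abs6 u1 u2 u3 v1 v2 v3 : Rabs (u1 + u2 + u3 - (v1 + v2 + v3)) <=
  Rabs u1 + Rabs u2 + Rabs u3 + Rabs v1 + Rabs v2 + Rabs v3.
Proof.
  assert (H1: Rabs (u1+u2+u3) <= Rabs u1 + Rabs u2 + Rabs u3)
    by (eapply Rle_trans; [apply Rabs_triang|]; apply Rplus_le_compat_r; apply Rabs_triang).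
  assert (H2: Rabs (v1+v2+v3) <= Rabs v1 + Rabs v2 + Rabs v3)
    by (eapply Rle_trans; [apply Rabs_triang|]; apply Rplus_le_compat_r; apply Rabs_triang).
  unfold Rminus. eapply Rle_trans; [apply Rabs_triang|]. rewrite Rabs_Ropp. lra.
Qed.

Lemma absmul_le u v U V : Rabs u <= U -> Rabs v <= V -> Rabs (u * v) <= U * V.
Proof.
  intros. rewrite Rabs_mult. apply Rmult_le_compat; auto; apply Rabs_pos.
Qed.

Lemma core m f g h a b xs eta :
  (1 <= m)%nat -> smupto m f -> smupto m g -> a < b ->
  NoDup xs -> length xs = S m -> In a xs -> In b xs ->
  (forall x, In x xs -> a - (b - a) <= x <= a + (b - a)) ->
  0 <= eta <= 1 ->
  (forall y, Rabs (y - a) <= 2*(b-a) -> Rabs (Derive_n f m y - Derive_n f m a) <= eta) ->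
  (forall y, Rabs (y - a) <= 2*(b-a) -> Rabs (Derive_n g m y - Derive_n g m a) <= eta) ->
  let I := RInt (fun x => Rabs (Derive (Taylor m f a) x) + Rabs (Derive (Taylor m g a) x)) a b in
  let Q := (2*(b-a))^m in
  Rabs (Acont m f g h a b - Adisc f g h xs a b) <= 4 * (INR m + 1)^2 * eta * (Q*Q + Q*I) /\
  Vdisc m f g xs a b <= 3 * (INR m + 1) * (Q*Q + Q*I) /\
  0 < Vdisc m f g xs a b /\ 0 <= I.
Proof.
  intros Hm Hf Hg Hab Hn Hl Ha Hb Hxs Heta Hetaf Hetag I Q.
  set (s := b - a). set (D := 2 * s). fold s D in Hxs, Hetaf, Hetag, Q.
  set (Tf := Taylor m f a). set (Tg := Taylor m g a).
  set (Pf := lagrange xs f). set (Pg := lagrange xs g).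
  set (Ef := fun x => Pf x - Tf x). set (Eg := fun x => Pg x - Tg x).
  assert (HTf : sm Tf) by apply (polyd_Taylor m f a).
  assert (HTg : sm Tg) by apply (polyd_Taylor m g a).
  assert (HPf : sm Pf) by apply (polyd_lagrange m xs f Hl).
  assert (HPg : sm Pg) by apply (polyd_lagrange m xs g Hl).
  assert (HEf : sm Ef) by (apply sm_minus; auto).
  assert (HEg : sm Eg) by (apply sm_minus; auto).
  set (M := INR m + 1).
  assert (HM : 2 <= M) by (unfold M; apply le_INR in Hm; simpl in Hm; lra).
  destruct m as [|m']; [lia|].
  set (e0 := M * eta * Q).
  set (e1 := INR (S m') * eta * D ^ m').
  assert (HDQ : D ^ m' * D = Q) by (unfold Q; rewrite <- tech_pow_Rmult; ring).
  assert (Hs : 0 < s) by (unfold s; lra).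
  assert (HQ : 0 < Q) by (unfold Q, D; apply pow_lt; lra).
  assert (Hse1 : s * e1 <= M * eta * Q).
  { unfold e1, M. rewrite <- HDQ. unfold D. set (X := (2*s)^m').
    assert (0 <= X) by (apply pow_le; lra).
    assert (0 <= s * eta * X) by (apply Rmult_le_pos; [apply Rmult_le_pos|]; lra).
    rewrite S_INR. assert (0 <= INR m') by apply pos_INR.
    replace (s * ((INR m' + 1) * eta * X)) with ((INR m' + 1) * (s * eta * X)) by ring.
    apply Rle_trans with ((INR m' + 1 + 1) * 2 * (s*eta*X)); [apply Rmult_le_compat_r; lra | right; ring]. }
  assert (He0 : 0 <= e0) by (unfold e0; apply Rmult_le_pos; [apply Rmult_le_pos|]; lra).
  assert (He1 : 0 <= e1) by (unfold e1, D; apply Rmult_le_pos; [apply Rmult_le_pos; [apply pos_INR|lra] | apply pow_le; lra]).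
  assert (HEb0 : forall (p : R -> R), smupto (S m') p ->
     (forall y, Rabs (y - a) <= D -> Rabs (Derive_n p (S m') y - Derive_n p (S m') a) <= eta) ->
     forall x, a <= x <= b -> Rabs (lagrange xs p x - Taylor (S m') p a x) <= e0).
  { intros p Hp Hetap x Hx.
    assert (Hbd := E_bound (S m') p a s eta xs Hp ltac:(lra) Hn Hl Hxs Hetap (S m') (le_n _) x ltac:(unfold s in *; lra)).
    rewrite Nat.sub_diag in Hbd. simpl Derive_n in Hbd. unfold e0, M, Q. exact Hbd. }
  assert (HEb1 : forall (p : R -> R), smupto (S m') p ->
     (forall y, Rabs (y - a) <= D -> Rabs (Derive_n p (S m') y - Derive_n p (S m') a) <= eta) ->
     forall x, a <= x <= b -> Rabs (Derive (fun x => lagrange xs p x - Taylor (S m') p a x) x) <= e1).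
  { intros p Hp Hetap x Hx.
    assert (Hbd := E_bound (S m') p a s eta xs Hp ltac:(lra) Hn Hl Hxs Hetap m' (le_S _ _ (le_n _)) x ltac:(unfold s in *; lra)).
    replace (S m' - m')%nat with 1%nat in Hbd by lia. rewrite <- S_INR in Hbd. unfold e1, D. exact Hbd. }
  assert (HIex : forall (p : R -> R), sm p -> ex_RInt (fun x => Rabs (Derive p x)) a b).
  { intros p Hp. apply exR. intros; cont. }
  assert (HI0 : 0 <= I).
  { unfold I. apply RInt_ge_0. lra. apply exR. intros; cont; apply sm_Taylor.
    intros; apply Rplus_le_le_0_compat; apply Rabs_pos. }
  assert (HIf : RInt (fun x => Rabs (Derive Tf x)) a b <= I).
  { unfold I. apply RInt_le. lra. apply HIex; auto. apply exR. intros; cont; apply sm_Taylor.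
    intros. assert (0 <= Rabs (Derive Tg x)) by apply Rabs_pos. fold Tf Tg. lra. }
  assert (HIg : RInt (fun x => Rabs (Derive Tg x)) a b <= I).
  { unfold I. apply RInt_le. lra. apply HIex; auto. apply exR. intros; cont; apply sm_Taylor.
    intros. assert (0 <= Rabs (Derive Tf x)) by apply Rabs_pos. fold Tf Tg. lra. }
  assert (HTfa : forall x, a <= x <= b -> Rabs (Tf x - f a) <= I).
  { intros x Hx. rewrite <- (Taylor_at (S m') f a). fold Tf. eapply Rle_trans; [apply (dev_bound _ a b x HTf Hx)|exact HIf]. }
  assert (HTga : forall x, a <= x <= b -> Rabs (Tg x - g a) <= I).
  { intros x Hx. rewrite <- (Taylor_at (S m') g a). fold Tg. eapply Rle_trans; [apply (dev_bound _ a b x HTg Hx)|exact HIg]. }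
  assert (Ef0 : forall x, a <= x <= b -> Rabs (Ef x) <= e0) by (intros; apply HEb0; auto).
  assert (Eg0 : forall x, a <= x <= b -> Rabs (Eg x) <= e0) by (intros; apply HEb0; auto).
  assert (Ef1 : forall x, a <= x <= b -> Rabs (Derive Ef x) <= e1) by (intros; apply HEb1; auto).
  assert (Eg1 : forall x, a <= x <= b -> Rabs (Derive Eg x) <= e1) by (intros; apply HEb1; auto).
  assert (DEf : forall x, Derive Ef x = Derive Pf x - Derive Tf x).
  { intros x. unfold Ef. apply Derive_minus; apply sm_exD; auto. }
  assert (DEg : forall x, Derive Eg x = Derive Pg x - Derive Tg x).
  { intros x. unfold Eg. apply Derive_minus; apply sm_exD; auto. }
  set (Rf := fun x => Derive Ef x * (Tg x - g a) + Derive Ef x * Eg x + Derive Tf x * Eg x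
     - (Derive Eg x * (Tf x - f a) + Derive Eg x * Ef x + Derive Tg x * Ef x)).
  set (bnd := fun x => 2 * e1 * I + 2 * e1 * e0 + e0 * (Rabs (Derive Tf x) + Rabs (Derive Tg x))).
  assert (HRb : forall x, a <= x <= b -> Rabs (Rf x) <= bnd x).
  { intros x Hx. unfold Rf. (eapply Rle_trans; [apply abs6|]).
    assert (H1 := absmul_le _ _ _ _ (Ef1 x Hx) (HTga x Hx)).
    assert (H2 := absmul_le _ _ _ _ (Ef1 x Hx) (Eg0 x Hx)).
    assert (H3 := absmul_le _ _ _ _ (Rle_refl (Rabs (Derive Tf x))) (Eg0 x Hx)).
    assert (H4 := absmul_le _ _ _ _ (Eg1 x Hx) (HTfa x Hx)).
    assert (H5 := absmul_le _ _ _ _ (Eg1 x Hx) (Ef0 x Hx)).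
    assert (H6 := absmul_le _ _ _ _ (Rle_refl (Rabs (Derive Tg x))) (Ef0 x Hx)).
    unfold bnd. lra. }
  assert (HRex : ex_RInt Rf a b).
  { apply exR. intros x. unfold Rf. cont. }
  assert (HbndI : RInt bnd a b = s * (2 * e1 * I + 2 * e1 * e0) + e0 * I).
  { unfold bnd. rewrite (RInt_plus (V:=R_CompleteNormedModule) (fun _ => 2 * e1 * I + 2 * e1 * e0)
       (fun x => e0 * (Rabs (Derive Tf x) + Rabs (Derive Tg x)))).
    rewrite RInt_const. rewrite (RInt_scal (V:=R_CompleteNormedModule) (fun x => Rabs (Derive Tf x) + Rabs (Derive Tg x))).
    unfold plus, scal; simpl; unfold mult; simpl. unfold I, s. reflexivity.
    apply exR; intros; cont. apply exR; intros; cont. apply exR; intros; cont. }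
  assert (HRI : Rabs (RInt Rf a b) <= s * (2 * e1 * I + 2 * e1 * e0) + e0 * I).
  { rewrite <- HbndI. eapply Rle_trans. apply abs_RInt_le. lra. auto.
    apply RInt_le. lra. apply exR. intros x. unfold Rf. cont. apply exR; intros; unfold bnd; cont.
    intros x Hx. apply HRb. lra. }
  set (G := fun x => g a * Ef x - f a * Eg x).
  assert (HG : sm G) by (apply sm_minus; apply sm_scal; auto).
  assert (DG : forall x, Derive G x = g a * Derive Ef x - f a * Derive Eg x).
  { intros x. unfold G. rewrite Derive_minus. rewrite !Derive_scal. reflexivity.
    apply ex_derive_scal; apply sm_exD; auto. apply ex_derive_scal; apply sm_exD; auto. }
  set (Ic := fun x => Derive Tf x * Tg x - Derive Tg x * Tf x).
  set (Id := fun x => Derive Pf x * Pg x - Derive Pg x * Pf x).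
  assert (HAc : Acont (S m') f g h a b = h b - h a - 2 * RInt Ic a b + 2 * f a * (g b - Tg b) - 2 * g a * (f b - Tf b)) by reflexivity.
  assert (HAd : Adisc f g h xs a b = h b - h a - 2 * RInt Id a b) by reflexivity.
  assert (Hkey : RInt Id a b - RInt Ic a b = G b - G a + RInt Rf a b).
  { assert (E1 : RInt Id a b - RInt Ic a b = RInt (fun x => Id x - Ic x) a b).
    { rewrite (RInt_minus (V:=R_CompleteNormedModule) Id Ic). reflexivity.
      apply exR; intros; unfold Id; cont. apply exR; intros; unfold Ic; cont. }
    rewrite E1. rewrite (RInt_ext _ (fun x => Derive G x + Rf x)).
    - rewrite (RInt_plus (V:=R_CompleteNormedModule) (Derive G) Rf).
      rewrite RInt_Derive. reflexivity.
      intros; apply sm_exD; auto. intros; cont.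
      apply exR; intros; cont. auto.
    - intros x _. unfold Id, Ic, Rf. rewrite DG, DEf, DEg. unfold Ef, Eg. match goal with |- ?A = ?B => change (@eq R A B) end. ring. }
  assert (HEa : Ef a = 0).
  { unfold Ef, Pf, Tf. rewrite lagrange_interp; auto. rewrite Taylor_at. ring. }
  assert (HEga : Eg a = 0).
  { unfold Eg, Pg, Tg. rewrite lagrange_interp; auto. rewrite Taylor_at. ring. }
  assert (HEb : Ef b = f b - Tf b).
  { unfold Ef, Pf. rewrite lagrange_interp; auto. }
  assert (HEgb : Eg b = g b - Tg b).
  { unfold Eg, Pg. rewrite lagrange_interp; auto. }
  assert (HAA : Acont (S m') f g h a b - Adisc f g h xs a b = 2 * RInt Rf a b).
  { rewrite HAc, HAd. unfold G in Hkey. rewrite HEa, HEga, HEb, HEgb in Hkey. lra. }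
  set (d := diam xs).
  assert (Hd1 : s <= d).
  { assert (H := diam_ge xs b a Hb Ha). fold d in H. rewrite Rabs_right in H. unfold s; lra. lra. }
  assert (Hd2 : d <= D).
  { assert (H := diam_le xs (a - s) (a + s) ltac:(lra) Hxs). fold d in H. unfold D; lra. }
  set (J := RInt (fun x => Rabs (Derive Pf x) + Rabs (Derive Pg x)) a b).
  assert (HVd : Vdisc (S m') f g xs a b = d ^ (2 * S m') + d ^ (S m') * J) by reflexivity.
  assert (HJ0 : 0 <= J).
  { unfold J. apply RInt_ge_0. lra. apply exR; intros; cont. intros; apply Rplus_le_le_0_compat; apply Rabs_pos. }
  assert (HJ : J <= I + 2 * e1 * s).
  { apply Rle_trans with (RInt (fun x => (Rabs (Derive Tf x) + Rabs (Derive Tg x)) + 2 * e1) a b).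
    - unfold J. apply RInt_le. lra. apply exR; intros; cont. apply exR; intros; cont.
      intros x Hx. assert (Hx' : a <= x <= b) by lra.
      assert (H1 := Ef1 x Hx'). assert (H2 := Eg1 x Hx'). rewrite DEf in H1. rewrite DEg in H2.
      assert (Rabs (Derive Pf x) <= Rabs (Derive Tf x) + Rabs (Derive Pf x - Derive Tf x)).
      { replace (Derive Pf x) with (Derive Tf x + (Derive Pf x - Derive Tf x)) at 1 by ring. apply Rabs_triang. }
      assert (Rabs (Derive Pg x) <= Rabs (Derive Tg x) + Rabs (Derive Pg x - Derive Tg x)).
      { replace (Derive Pg x) with (Derive Tg x + (Derive Pg x - Derive Tg x)) at 1 by ring. apply Rabs_triang. }
      lra.
    - rewrite (RInt_plus (V:=R_CompleteNormedModule) (fun x => Rabs (Derive Tf x) + Rabs (Derive Tg x)) (fun _ => 2 * e1)).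
      rewrite RInt_const. unfold plus, scal; simpl; unfold mult; simpl. fold s. unfold I. fold Tf Tg. right; ring.
      apply exR; intros; cont. apply exR; intros; cont. }
  assert (Hdm : 0 < d ^ S m' <= Q).
  { split. apply pow_lt. lra. unfold Q. apply pow_incr. lra. }
  replace (2 * S m')%nat with (S m' + S m')%nat in HVd by lia. rewrite pow_add in HVd.
  set (dm := d ^ S m') in *.
  assert (Hse1' : 2 * e1 * s <= 2 * M * Q).
  { assert (0 <= M * Q) by nra. assert (M * eta * Q <= M * Q) by nra. lra. }
  split; [|split; [|split]].
  - rewrite HAA. rewrite Rabs_mult. rewrite (Rabs_right 2) by lra.
    assert (Hp1 : 0 <= I * (M * eta * Q - s * e1)) by (apply Rmult_le_pos; lra).
    assert (Hp2 : 0 <= e0 * (M * eta * Q - s * e1)) by (apply Rmult_le_pos; lra).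
    assert (Hp3 : 0 <= M * M * Q * Q * eta * (1 - eta)).
    { apply Rmult_le_pos; [|lra].
      assert (HMM : 0 <= M * M) by nra.
      assert (HMQ := Rmult_le_pos _ _ HMM (Rlt_le _ _ HQ)).
      assert (HMQQ := Rmult_le_pos _ _ HMQ (Rlt_le _ _ HQ)).
      apply Rmult_le_pos; lra. }
    assert (Hp4 : 0 <= (4 * M * M - 6 * M) * (eta * Q * I)).
    { apply Rmult_le_pos. nra.
      assert (H1 := Rmult_le_pos _ _ (proj1 Heta) (Rlt_le _ _ HQ)).
      apply Rmult_le_pos; lra. }
    unfold e0 in *. simpl pow. nra.
  - rewrite HVd.
    assert (dm * dm <= Q * Q) by (apply Rmult_le_compat; lra).
    assert (dm * J <= Q * (I + 2 * e1 * s)) by (apply Rmult_le_compat; lra).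
    assert (Q * (2 * e1 * s) <= Q * (2 * M * Q)) by (apply Rmult_le_compat_l; lra).
    assert (0 <= (M - 1) * (Q * Q)) by (apply Rmult_le_pos; nra).
    assert (0 <= (3 * M - 1) * (Q * I)) by (apply Rmult_le_pos; nra).
    nra.
  - rewrite HVd. assert (0 < dm * dm) by nra. assert (0 <= dm * J) by nra. lra.
  - exact HI0.
Qed.

Lemma build_xs m K a b : (1 <= m)%nat -> K a -> K b -> a < b ->
  (nonisol K a \/ m = 1%nat) ->
  exists xs, NoDup xs /\ length xs = S m /\ In a xs /\ In b xs /\ (forall x, In x xs -> K x) /\
    (forall x, In x xs -> a - (b - a) <= x <= a + (b - a)).
Proof.
  intros Hm Ka Kb Hab [Hna|Hm1].
  - destruct (pick_points K a Hna (m - 1) (b - a) ltac:(lra)) as [L [HL1 [HL2 HL3]]].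
    exists (a :: b :: L). split; [|split; [|split; [|split; [|split]]]].
    + constructor. intros [H|H]. lra. apply HL3 in H. destruct H as [_ H]. rewrite Rminus_diag, Rabs_R0 in H. lra.
      constructor; auto. intros H. apply HL3 in H. destruct H as [_ H]. rewrite Rabs_right in H; lra.
    + simpl. rewrite HL1. lia.
    + simpl; auto.
    + simpl; auto.
    + intros x [H|[H|H]]; subst; auto. apply HL3; auto.
    + intros x [H|[H|H]]; subst; try lra. apply HL3 in H. destruct H as [_ H]. destruct H as [_ H]. apply Rabs_lt_between' in H. lra.
  - subst m. exists [a; b]. split; [|split; [|split; [|split; [|split]]]].
    + constructor. intros [H|[]]. lra. constructor. intros []. constructor.
    + reflexivity.
    + simpl; auto.
    + simpl; auto.
    + intros x [H|[H|[]]]; subst; auto.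
    + intros x [H|[H|[]]]; subst; lra.
Qed.

Lemma unif_cont_der (p : R -> R) lo hi : (forall x, continuous p x) ->
  forall eta, 0 < eta -> exists del, 0 < del /\ forall x y, lo <= x <= hi -> lo <= y <= hi ->
    Rabs (x - y) < del -> Rabs (p x - p y) < eta.
Proof.
  intros Hc eta Heta.
  assert (H := Rtopology.Heine p (fun c => lo <= c <= hi) (Rtopology.compact_P3 lo hi)).
  destruct (H (fun x _ => proj2 (continuity_pt_filterlim p x) (Hc x)) (mkposreal eta Heta)) as [del Hdel].
  exists del. split. apply cond_pos. intros; apply Hdel; auto.
Qed.

Lemma Rabs_div_pos x y : 0 < y -> Rabs (x / y) = Rabs x / y.
Proof.
  intros Hy. unfold Rdiv. rewrite Rabs_mult. rewrite (Rabs_right (/ y)). reflexivity.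
  left; apply Rinv_0_lt_compat; auto.
Qed.

Theorem lemma4p5 (m : nat) (f g h : R -> R) (K : R -> Prop) :
  (1 <= m)%nat ->
  Cm m f -> Cm m g -> Cm m h ->
  Rtopology.compact K ->
  at_least_points (S m) K ->
  (finitely_many_isolated K \/ m = 1%nat) ->
  discrete_AV_condition m f g h K ->
  AV_condition m f g h K.
Proof.
  intros Hm [Hf1 [Hf2 _]] [Hg1 [Hg2 _]] _ HK _ Hiso Hdisc eps Heps.
  assert (Hf : smupto m f) by exact Hf1.
  assert (Hg : smupto m g) by exact Hg1.
  destruct (Rtopology.compact_P1 K HK) as [lo [hi Hlh]].
  set (M := INR m + 1).
  assert (HM : 2 <= M) by (unfold M; apply le_INR in Hm; simpl in Hm; lra).
  set (F := 4 ^ m).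
  assert (HF : 1 <= F) by (unfold F; rewrite <- (pow1 m); apply pow_incr; lra).
  set (eps1 := eps / (2 * (3 * M * F))).
  assert (HMF : 0 < M * F) by (apply Rmult_lt_0_compat; lra).
  assert (HMMF : 0 < M * M * F) by (apply Rmult_lt_0_compat; [apply Rmult_lt_0_compat|]; lra).
  assert (Heps1 : 0 < eps1) by (unfold eps1; apply Rdiv_lt_0_compat; [lra|]; replace (2*(3*M*F)) with (6*(M*F)) by ring; lra).
  set (eta := Rmin 1 (eps / (8 * M * M * F))).
  assert (Heta : 0 < eta) by (unfold eta; apply Rmin_pos; [lra|apply Rdiv_lt_0_compat; [lra|]; replace (8*M*M*F) with (8*(M*M*F)) by ring; lra]).
  assert (Heta1 : eta <= 1) by apply Rmin_l.
  assert (Heta2 : eta <= eps / (8 * M * M * F)) by apply Rmin_r.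
  destruct (unif_cont_der (Derive_n f m) (lo - 1) (hi + 1) (fun x => Hf2 m x (le_n m)) eta Heta) as [df [Hdf Hdf2]].
  destruct (unif_cont_der (Derive_n g m) (lo - 1) (hi + 1) (fun x => Hg2 m x (le_n m)) eta Heta) as [dg [Hdg Hdg2]].
  destruct (Hdisc eps1 Heps1) as [dd [Hdd Hdd2]].
  assert (Hiso' : exists d0, 0 < d0 /\ forall a b, K a -> K b -> 0 < b - a < d0 -> nonisol K a \/ m = 1%nat).
  { destruct Hiso as [Hfin|Hm1].
    - destruct (fin_isol_nonisol K Hfin) as [d0 [Hd0 H]]. exists d0. split; auto.
      intros; left; eapply H; eauto.
    - exists 1. split. lra. auto. }
  destruct Hiso' as [d0 [Hd0 Hd0']].
  exists (Rmin (Rmin (Rmin (dd / 2) (df / 2)) (Rmin (dg / 2) (1 / 2))) d0).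
  split.
  { repeat apply Rmin_pos; lra. }
  intros a b Ka Kb Hab.
  destruct Hab as [Hab1 Hab2].
  assert (Hs1 : b - a < dd / 2) by (eapply Rlt_le_trans; [exact Hab2|]; repeat (apply Rle_trans with (1:=Rmin_l _ _)); lra).
  assert (Hs2 : b - a < df / 2).
  { eapply Rlt_le_trans; [exact Hab2|]. apply Rle_trans with (1:=Rmin_l _ _). apply Rle_trans with (1:=Rmin_l _ _). apply Rmin_r. }
  assert (Hs3 : b - a < dg / 2).
  { eapply Rlt_le_trans; [exact Hab2|]. apply Rle_trans with (1:=Rmin_l _ _). apply Rle_trans with (1:=Rmin_r _ _). apply Rmin_l. }
  assert (Hs4 : b - a < 1 / 2).
  { eapply Rlt_le_trans; [exact Hab2|]. apply Rle_trans with (1:=Rmin_l _ _). apply Rle_trans with (1:=Rmin_r _ _). apply Rmin_r. }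
  assert (Hs5 : b - a < d0) by (eapply Rlt_le_trans; [exact Hab2|]; apply Rmin_r).
  destruct (build_xs m K a b Hm Ka Kb ltac:(lra) (Hd0' a b Ka Kb ltac:(lra))) as [xs [Hn [Hl [Ha [Hb [HxK Hxs]]]]]].
  assert (Hla := Hlh a Ka).
  assert (Hef : forall y, Rabs (y - a) <= 2 * (b - a) -> Rabs (Derive_n f m y - Derive_n f m a) <= eta).
  { intros y Hy. left. assert (-(2*(b-a)) <= y - a <= 2*(b-a)) by (unfold Rabs in Hy; destruct (Rcase_abs (y-a)); lra).
    apply Hdf2; try lra; unfold Rabs; destruct (Rcase_abs (y-a)); lra. }
  assert (Heg : forall y, Rabs (y - a) <= 2 * (b - a) -> Rabs (Derive_n g m y - Derive_n g m a) <= eta).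
  { intros y Hy. left. assert (-(2*(b-a)) <= y - a <= 2*(b-a)) by (unfold Rabs in Hy; destruct (Rcase_abs (y-a)); lra).
    apply Hdg2; try lra; unfold Rabs; destruct (Rcase_abs (y-a)); lra. }
  assert (Hc := core m f g h a b xs eta Hm Hf Hg ltac:(lra) Hn Hl Ha Hb Hxs ltac:(lra) Hef Heg).
  cbv zeta in Hc.
  set (I := RInt (fun x => Rabs (Derive (Taylor m f a) x) + Rabs (Derive (Taylor m g a) x)) a b) in Hc.
  set (Q := (2 * (b - a)) ^ m) in Hc.
  destruct Hc as [HA [HV [HVd HI]]].
  assert (Hdiam : diam xs < dd).
  { assert (H := diam_le xs (a - (b - a)) (a + (b - a)) ltac:(lra) Hxs). lra. }
  assert (HAd := Hdd2 xs Hn Hl HxK Hdiam a b Ha Hb ltac:(lra)).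
  set (Ac := Acont m f g h a b) in *. set (Ad := Adisc f g h xs a b) in *.
  set (Vd := Vdisc m f g xs a b) in *.
  rewrite Rabs_div_pos in HAd by exact HVd.
  assert (HAd' : Rabs Ad < eps1 * Vd).
  { apply (Rmult_lt_compat_r Vd) in HAd; auto. unfold Rdiv in HAd. rewrite Rmult_assoc, Rinv_l in HAd; lra. }
  set (sm := (b - a) ^ m).
  assert (Hsm : 0 < sm) by (apply pow_lt; lra).
  assert (HVc : Vcont m f g a b = sm * sm + sm * I).
  { unfold Vcont. fold I. unfold sm. replace (2 * m)%nat with (m + m)%nat by lia. rewrite pow_add. reflexivity. }
  assert (HQ : Q = 2 ^ m * sm) by (unfold Q, sm; apply Rpow_mult_distr).
  assert (HF2 : F = 2 ^ m * 2 ^ m) by (unfold F; rewrite <- Rpow_mult_distr; f_equal; lra).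
  assert (H2m : 1 <= 2 ^ m) by (rewrite <- (pow1 m); apply pow_incr; lra).
  assert (HW : Q * Q + Q * I <= F * (sm * sm + sm * I)).
  { rewrite HQ, HF2. assert (0 <= sm * I) by (apply Rmult_le_pos; lra).
    assert (2 ^ m * (sm * I) <= 2 ^ m * 2 ^ m * (sm * I)).
    { rewrite Rmult_assoc. apply Rmult_le_compat_l. lra. nra. }
    nra. }
  assert (HVcpos : 0 < Vcont m f g a b).
  { rewrite HVc. assert (0 < sm * sm) by nra. assert (0 <= sm * I) by (apply Rmult_le_pos; lra). lra. }
  rewrite Rabs_div_pos by exact HVcpos.
  apply (Rmult_lt_reg_r (Vcont m f g a b)); auto. unfold Rdiv. rewrite Rmult_assoc, Rinv_l by lra. rewrite Rmult_1_r.
  set (W := Q * Q + Q * I) in *. set (Vc := Vcont m f g a b) in *. rewrite <- HVc in HW.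
  assert (HW0 : 0 <= W).
  { assert (0 <= Q) by (unfold Q; apply pow_le; lra). unfold W.
    assert (0 <= Q * Q) by (apply Rmult_le_pos; lra). assert (0 <= Q * I) by (apply Rmult_le_pos; lra). lra. }
  assert (Htri : Rabs Ac <= Rabs Ad + Rabs (Ac - Ad)).
  { replace Ac with (Ad + (Ac - Ad)) at 1 by ring. apply Rabs_triang. }
  fold M in HV, HA.
  assert (H1 : eps1 * Vd <= eps1 * (3 * M * W)) by (apply Rmult_le_compat_l; lra).
  assert (H2 : eps1 * (3 * M * W) <= eps / 2 * Vc).
  { unfold eps1. replace (eps / (2 * (3 * M * F)) * (3 * M * W)) with (eps / 2 * (W / F)) by (field; lra).
    apply Rmult_le_compat_l. lra. apply (Rmult_le_reg_r F). lra. unfold Rdiv. rewrite Rmult_assoc, Rinv_l by lra. lra. }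
  assert (H3 : 4 * M ^ 2 * eta * W <= eps / 2 * Vc).
  { apply Rle_trans with (4 * M ^ 2 * (eps / (8 * M * M * F)) * W).
    - apply Rmult_le_compat_r; auto. apply Rmult_le_compat_l; auto. nra.
    - replace (4 * M ^ 2 * (eps / (8 * M * M * F)) * W) with (eps / 2 * (W / F)) by (field; lra).
      apply Rmult_le_compat_l. lra. apply (Rmult_le_reg_r F). lra. unfold Rdiv. rewrite Rmult_assoc, Rinv_l by lra. lra. }
  lra.
Qed.
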